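(* Let $\Phi$ be a channel matrix whose rows $P^1,\dots,P^4\in\Delta^n$ are in general position, let $Q^0$ be the equidistant point from $P^1,\dots,P^4$ with barycentric coordinate $\boldsymbol\lambda^0$, and suppose $\lambda^0_1<0$, $\lambda^0_2<0$, $\lambda^0_3\ge0$, $\lambda^0_4\ge0$. Let $Q^{1(1)}=\pi(Q^0|L(P^2,P^3,P^4))$ and $Q^{1(2)}=\pi(Q^0|L(P^1,P^3,P^4))$ with barycentric coordinates $\boldsymbol\lambda^{1(1)},\boldsymbol\lambda^{1(2)}$ about $P^1,\dots,P^4$, and suppose $\lambda^{1(2)}_1<0$. Suppose further $\lambda^{1(1)}_2<0$, $\lambda^{1(1)}_3\ge0$, $\lambda^{1(1)}_4\ge0$, and let $Q^2=\pi(Q^{1(1)}|L(P^3,P^4))$. Then the output distribution achieving the channel capacity is $Q^\ast=Q^2$ and the channel capacity is $C=D(P^3\|Q^2)$.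
   Context: $\Delta^n=\{Q:Q_j>0,\sum_jQ_j=1\}$, $\bar\Delta^m=\{\boldsymbol\lambda:\lambda_i\ge0,\sum_i\lambda_i=1\}$; $D(Q\|Q')=\sum_jQ_j\log(Q_j/Q'_j)$. Rows are in general position if $P^2-P^1,\dots,P^m-P^1$ are linearly independent. $L(S^1,\dots,S^r)=\{\sum_i\lambda_iS^i:\sum_i\lambda_i=1\}\cap\Delta^n$; for such an affine subspace $L$, $\pi(Q'|L)$ is the unique $Q\in L$ minimizing $D(Q\|Q')$. The barycentric coordinate of $Q\in L(P^1,\dots,P^m)$ is the unique $\boldsymbol\lambda$ with $\sum_i\lambda_i=1$, $Q=\sum_i\lambda_iP^i$. The equidistant point is the unique $Q^0\in L(P^1,\dots,P^m)$ with all $D(P^i\|Q^0)$ equal. Mutual information $I(\boldsymbol\lambda,\Phi)=\sum_{i,j}\lambda_iP^i_j\log(P^i_j/Q_j)$ with $Q=\boldsymbol\lambda\Phi$; capacity $C=\max_{\boldsymbol\lambda\in\bar\Delta^m}I(\boldsymbol\lambda,\Phi)$; the capacity-achieving output distribution is $Q^\ast=\boldsymbol\lambda^\ast\Phi$ for a maximizer $\boldsymbol\lambda^\ast$ (unique). *)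

(* Defs.v *)
From HB Require Import structures.
From mathcomp Require Import all_boot all_order all_algebra.
From mathcomp Require Import all_classical all_reals all_analysis.
Set Implicit Arguments. Unset Strict Implicit. Unset Printing Implicit Defensive.
Import Order.TTheory GRing.Theory Num.Theory.
Local Open Scope ring_scope.

Section Defs.
Variable R : realType.

Definition in_simplex (n : nat) (Q : 'I_n -> R) : Prop :=
  (forall j, 0 < Q j) /\ \sum_(j < n) Q j = 1.

Definition in_csimplex (m : nat) (lam : 'I_m -> R) : Prop :=
  (forall i, 0 <= lam i) /\ \sum_(i < m) lam i = 1.

Definition KL (n : nat) (Q Q' : 'I_n -> R) : R :=
  \sum_(j < n) Q j * ln (Q j / Q' j).

(* lam Phi : the combination sum_i lam_i P^i, rows P i of Phi *)
Definition comb (m n : nat) (P : 'I_m -> 'I_n -> R) (lam : 'I_m -> R) : 'I_n -> R :=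
  fun j => \sum_(i < m) lam i * P i j.

Definition general_position (m n : nat) (P : 'I_m.+1 -> 'I_n -> R) : Prop :=
  forall c : 'I_m.+1 -> R,
    (forall j, \sum_(i < m.+1 | i != ord0) c i * (P i j - P ord0 j) = 0) ->
    forall i, i != ord0 -> c i = 0.

Definition in_L (m n : nat) (P : 'I_m -> 'I_n -> R) (S : {set 'I_m})
    (Q : 'I_n -> R) : Prop :=
  (exists lam : 'I_m -> R,
     (forall i, i \notin S -> lam i = 0) /\ \sum_(i < m) lam i = 1 /\
     Q = comb P lam) /\ in_simplex Q.

Definition is_proj (m n : nat) (P : 'I_m -> 'I_n -> R) (S : {set 'I_m})
    (Q' Q : 'I_n -> R) : Prop :=
  in_L P S Q /\ forall Q'', in_L P S Q'' -> KL Q Q' <= KL Q'' Q'.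

Definition barycentric (m n : nat) (P : 'I_m -> 'I_n -> R) (Q : 'I_n -> R)
    (lam : 'I_m -> R) : Prop :=
  \sum_(i < m) lam i = 1 /\ Q = comb P lam.

Definition equidistant (m n : nat) (P : 'I_m -> 'I_n -> R) (Q0 : 'I_n -> R) : Prop :=
  in_L P [set: 'I_m] Q0 /\ forall i i', KL (P i) Q0 = KL (P i') Q0.

Definition mutual_info (m n : nat) (P : 'I_m -> 'I_n -> R) (lam : 'I_m -> R) : R :=
  \sum_(i < m) \sum_(j < n) lam i * P i j * ln (P i j / comb P lam j).

Definition is_capacity (m n : nat) (P : 'I_m -> 'I_n -> R) (C : R) : Prop :=
  (exists lam, in_csimplex lam /\ mutual_info P lam = C) /\
  forall lam, in_csimplex lam -> mutual_info P lam <= C.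

Definition capacity_output (m n : nat) (P : 'I_m -> 'I_n -> R) (Q : 'I_n -> R) : Prop :=
  (exists lam, in_csimplex lam /\
     (forall mu, in_csimplex mu -> mutual_info P mu <= mutual_info P lam) /\
     comb P lam = Q) /\
  forall lam, in_csimplex lam ->
     (forall mu, in_csimplex mu -> mutual_info P mu <= mutual_info P lam) ->
     comb P lam = Q.

End Defs.

Definition r1 : 'I_4 := @Ordinal 4 0 isT.
Definition r2 : 'I_4 := @Ordinal 4 1 isT.
Definition r3 : 'I_4 := @Ordinal 4 2 isT.
Definition r4 : 'I_4 := @Ordinal 4 3 isT.

(* Main.v *)
Require Import Defs.
From HB Require Import structures.
From mathcomp Require Import all_boot all_order all_algebra.
From mathcomp Require Import all_classical all_reals all_analysis.
From mathcomp Require Import ring lra.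
Import Order.TTheory GRing.Theory Num.Theory.
Local Open Scope ring_scope.

Section Aux.
Context {R : realType}.

Lemma ln_le_sub1 {x : R} : 0 < x -> ln x <= x - 1.
Proof.
move=> x0; have := expR_ge1Dx (ln x); rewrite lnK ?posrE //.
by move=> h; rewrite lerBrDl.
Qed.

Lemma ln_lt_sub1 {x : R} : 0 < x -> x != 1 -> ln x < x - 1.
Proof.
move=> x0 x1; have : ln x != 0 by rewrite ln_eq0.
move/expR_gt1Dx; rewrite lnK ?posrE //.
by move=> h; rewrite ltrBrDl.
Qed.

Lemma ln_divE (a b : R) : 0 < a -> 0 < b -> ln (a / b) = ln a - ln b.
Proof. by move=> a0 b0; rewrite ln_div ?posrE. Qed.

Lemma term_ge (a b : R) : 0 < a -> 0 < b -> a - b <= a * ln (a / b).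
Proof.
move=> a0 b0; have := ln_le_sub1 (divr_gt0 b0 a0).
have -> : ln (b/a) = - ln (a/b) by rewrite !ln_divE // opprB.
move=> h; have : a * (- ln (a/b)) <= a * (b / a - 1) by rewrite ler_pM2l.
rewrite mulrBr mulr1 mulrCA divff ?gt_eqF // mulr1 mulrN.
by move=> h2; lra.
Qed.

Lemma term_gt {a b : R} : 0 < a -> 0 < b -> a != b -> a - b < a * ln (a / b).
Proof.
move=> a0 b0 ab; have : b / a != 1.
  by apply/eqP=> h; move: ab; rewrite -(divr1_eq h) eqxx.
move/(ln_lt_sub1 (divr_gt0 b0 a0)).
have -> : ln (b/a) = - ln (a/b) by rewrite !ln_divE // opprB.
move=> h; have : a * (- ln (a/b)) < a * (b / a - 1) by rewrite ltr_pM2l.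
rewrite mulrBr mulr1 mulrCA divff ?gt_eqF // mulr1 mulrN.
by move=> h2; lra.
Qed.

Lemma term_le {a b : R} : 0 < a -> 0 < b -> a * ln (a / b) <= (a - b) ^+ 2 / b + (a - b).
Proof.
move=> a0 b0; have := ln_le_sub1 (divr_gt0 a0 b0) => h.
have : a * ln (a/b) <= a * (a / b - 1) by rewrite ler_pM2l.
move/le_trans; apply; rewrite le_eqVlt; apply/orP; left; apply/eqP.
by field; rewrite gt_eqF.
Qed.

Lemma simplex_le1 {n} {p : 'I_n -> R} j : in_simplex p -> p j <= 1.
Proof.
case=> p0 p1; rewrite -p1 (bigD1 j) //= lerDl.
by apply: sumr_ge0 => i _; apply: ltW.
Qed.

Lemma KL_ge0 {n} {X Y : 'I_n -> R} : in_simplex X -> in_simplex Y -> 0 <= KL X Y.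
Proof.
move=> [X0 X1] [Y0 Y1]; rewrite /KL.
have : \sum_(j < n) (X j - Y j) <= \sum_(j < n) X j * ln (X j / Y j).
  by apply: ler_sum => j _; apply: term_ge.
by rewrite sumrB X1 Y1 subrr.
Qed.

Lemma KL_eq0 {n} {X Y : 'I_n -> R} : in_simplex X -> in_simplex Y -> KL X Y = 0 -> X = Y.
Proof.
move=> [X0 X1] [Y0 Y1]; rewrite /KL => h.
have e : \sum_(j < n) (X j * ln (X j / Y j) - (X j - Y j)) = 0.
  by rewrite sumrB h sumrB X1 Y1 !subrr.
apply: funext => j; apply/eqP; apply/negPn/negP => ne.
have := term_gt (X0 j) (Y0 j) ne.
have : 0 <= \sum_(k < n | k != j) (X k * ln (X k / Y k) - (X k - Y k)).
  by apply: sumr_ge0 => k _; rewrite subr_ge0; apply: term_ge.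
by move: e; rewrite (bigD1 j) //= => e h1 h2; lra.
Qed.

Lemma KL_self n (X : 'I_n -> R) : KL X X = 0.
Proof.
rewrite /KL; apply: big1 => j _.
have [->|ne] := eqVneq (X j) 0; first by rewrite mul0r.
by rewrite divff // ln1 mulr0.
Qed.

Lemma ellP {n} {p X Y : 'I_n -> R} : (forall j, 0 < p j) -> (forall j, 0 < X j) ->
  (forall j, 0 < Y j) -> KL p Y - KL p X = \sum_(j < n) p j * ln (X j / Y j).
Proof.
move=> p0 X0 Y0; rewrite /KL -sumrB; apply: eq_bigr => j _.
by rewrite -mulrBr !ln_divE //; congr (_ * _); lra.
Qed.

Lemma ell_comb m n (P : 'I_m -> 'I_n -> R) (mu : 'I_m -> R) (X Y : 'I_n -> R) :
  (forall i j, 0 < P i j) -> (forall j, 0 < X j) -> (forall j, 0 < Y j) ->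
  \sum_(i < m) mu i * (KL (P i) Y - KL (P i) X) =
  \sum_(j < n) comb P mu j * ln (X j / Y j).
Proof.
move=> P0 X0 Y0; under eq_bigr => i _ do rewrite ellP // mulr_sumr.
rewrite exchange_big /=; apply: eq_bigr => j _.
by rewrite /comb mulr_suml; apply: eq_bigr => i _; rewrite mulrA.
Qed.

Lemma mi_eq m n (P : 'I_m -> 'I_n -> R) (lam : 'I_m -> R) :
  mutual_info P lam = \sum_(i < m) lam i * KL (P i) (comb P lam).
Proof.
rewrite /mutual_info /KL; apply: eq_bigr => i _; rewrite mulr_sumr.
by apply: eq_bigr => j _; rewrite mulrA.
Qed.

Definition ee {m} (k : 'I_m) : 'I_m -> R := fun i => (i == k)%:R.

Lemma comb_e m n (P : 'I_m -> 'I_n -> R) (k : 'I_m) : comb P (ee k) = P k.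
Proof.
apply: funext => j; rewrite /comb (bigD1 k) //= big1 /ee ?eqxx ?mul1r ?addr0 //.
by move=> i /negbTE ->; rewrite mul0r.
Qed.

Lemma sum_e {m} (k : 'I_m) : \sum_(i < m) ee k i = 1.
Proof.
rewrite (bigD1 k) //= big1 /ee ?eqxx ?addr0 //.
by move=> i /negbTE ->.
Qed.

Lemma bary_uniq {m n} {P : 'I_m.+1 -> 'I_n -> R} {a b : 'I_m.+1 -> R} :
  general_position P -> \sum_(i < m.+1) a i = 1 -> \sum_(i < m.+1) b i = 1 ->
  comb P a = comb P b -> a = b.
Proof.
move=> gp sa sb eab.
pose c i := a i - b i.
have sc : \sum_(i < m.+1) c i = 0 by rewrite sumrB sa sb subrr.
have cP : forall j, \sum_(i < m.+1) c i * P i j = 0.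
  move=> j; have := congr1 (fun f => f j) eab; rewrite /comb => e.
  by rewrite /c; under eq_bigr => i _ do rewrite mulrBl; rewrite sumrB e subrr.
have H : forall i, i != ord0 -> c i = 0.
  have gpc := gp c; apply: gpc => j.
  under eq_bigr => i _ do rewrite mulrBr.
  rewrite sumrB -mulr_suml.
  have h1 := cP j; have h2 := sc.
  rewrite (bigD1 ord0) //= in h1; rewrite (bigD1 ord0) //= in h2.
  move/eqP: h1; rewrite addrC addr_eq0 => /eqP ->.
  move/eqP: h2; rewrite addrC addr_eq0 => /eqP ->.
  by rewrite mulNr opprK addrC subrr.
have H0 : c ord0 = 0.
  by move: sc; rewrite (bigD1 ord0) //= big1 ?addr0.
apply: funext => i; apply/eqP; rewrite -subr_eq0; apply/eqP.
by have [->|/H] := eqVneq i ord0.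
Qed.

Lemma pos_lb {n} {Q : 'I_n -> R} : (forall j, 0 < Q j) ->
  exists2 d, 0 < d & forall j, d <= Q j.
Proof.
move=> Q0; exists (\big[Num.min/1]_(j < n) Q j).
  by elim/big_ind: _ => // x y hx hy; rewrite lt_min hx hy.
by move=> j; rewrite (bigD1 j) //= ge_min lexx.
Qed.

Lemma sum4 (F : 'I_4 -> R) : \sum_(i < 4) F i = F r1 + F r2 + F r3 + F r4.
Proof.
rewrite !big_ord_recr big_ord0 /= add0r.
by congr (_ + _ + _ + _); congr F; apply: val_inj.
Qed.

Lemma foc m n (P : 'I_m -> 'I_n -> R) (S : {set 'I_m}) (Q' Q : 'I_n -> R) (i k : 'I_m) :
  (forall l, in_simplex (P l)) -> in_simplex Q' -> is_proj P S Q' Q -> i \in S -> k \in S ->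
  KL (P i) Q - KL (P i) Q' = KL (P k) Q - KL (P k) Q'.
Proof.
move=> HP HQ' [[[lam [lsupp [lsum lQ]]] HQ] Hmin] iS kS.
have Q0 := HQ.1; have Q'0 := HQ'.1.
have P0 : forall l j, 0 < P l j by move=> l; case: (HP l).
pose d j := P i j - P k j.
pose g := \sum_(j < n) d j * ln (Q j / Q' j).
suff g0 : g = 0.
  have e1 := ellP (P0 i) Q0 Q'0; have e2 := ellP (P0 k) Q0 Q'0.
  have : g = \sum_(j < n) P i j * ln (Q j / Q' j) - \sum_(j < n) P k j * ln (Q j / Q' j).
    by rewrite /g -sumrB; apply: eq_bigr => j _; rewrite mulrBl.
  by lra.
pose K := \sum_(j < n) d j ^+ 2 / Q j.
have K0 : 0 <= K by apply: sumr_ge0 => j _; apply: divr_ge0; [apply: sqr_ge0 | apply: ltW].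
have [δ δ0 δle] := pos_lb Q0.
have key : forall t, `|t| < δ -> 0 <= t * g + t ^+ 2 * K.
  move=> t ht.
  pose Qt j := Q j + t * d j.
  have Qt0 : forall j, 0 < Qt j.
    move=> j; have hd : `|d j| <= 1.
      have := P0 i j; have := P0 k j.
      have := simplex_le1 j (HP i); have := simplex_le1 j (HP k).
      by rewrite ler_norml /d => *; apply/andP; split; lra.
    have h1 : `|t * d j| <= `|t| by rewrite normrM ler_piMr.
    have h2 : - (t * d j) <= `|t * d j| by rewrite -normrN ler_norm.
    have := δle j; rewrite /Qt; lra.
  have sd : \sum_(j < n) d j = 0 by rewrite sumrB (HP i).2 (HP k).2 subrr.
  have Qts : \sum_(j < n) Qt j = 1 by rewrite big_split /= -mulr_sumr sd mulr0 addr0 HQ.2.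
  have QtL : in_L P S Qt.
    split; last by split.
    exists (fun l => lam l + t * (ee i l - ee k l)); split.
      move=> l lS; rewrite lsupp // /ee.
      have -> : (l == i) = false by apply/negbTE; apply: contraNneq lS => ->.
      have -> : (l == k) = false by apply/negbTE; apply: contraNneq lS => ->.
      by rewrite subrr mulr0 addr0.
    split.
      by rewrite big_split /= lsum -mulr_sumr sumrB !sum_e subrr mulr0 addr0.
    apply: funext => j.
    have : comb P (fun l => lam l + t * (ee i l - ee k l)) j =
           comb P lam j + t * (comb P (ee i) j - comb P (ee k) j).
      rewrite /comb -sumrB mulr_sumr -big_split; apply: eq_bigr => l _ /=.
      by rewrite mulrDl -mulrA mulrBl.
    by move=> ->; rewrite !comb_e -lQ.
  have hmin := Hmin _ QtL.
  have e2 := ellP Qt0 Q0 Q'0.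
  have e3 : \sum_(j < n) Qt j * ln (Q j / Q' j) = KL Q Q' + t * g.
    rewrite /KL /g mulr_sumr -big_split; apply: eq_bigr => j _ /=.
    by rewrite /Qt mulrDl mulrA.
  have e4 : KL Qt Q <= t ^+ 2 * K.
    rewrite /KL.
    apply: (le_trans (ler_sum _ (fun j _ => term_le (Qt0 j) (Q0 j)))).
    rewrite big_split /= /Qt.
    have -> : \sum_(j < n) (Q j + t * d j - Q j) = 0.
      rewrite (eq_bigr (fun j => t * d j)); last by move=> j _; rewrite addrC addKr.
      by rewrite -mulr_sumr sd mulr0.
    rewrite addr0 /K mulr_sumr le_eqVlt; apply/orP; left; apply/eqP.
    by apply: eq_bigr => j _; rewrite addrC addKr; ring.
  by lra.
apply/eqP; apply/negPn/negP => gne.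
pose D := `|g| + δ * K + 1.
have D0 : 0 < D by rewrite /D; have := normr_ge0 g; have := mulr_ge0 (ltW δ0) K0; lra.
pose s := δ / D.
have s0 : 0 < s by rewrite /s divr_gt0.
have sD : s * D = δ by rewrite /s divfK // gt_eqF.
have g2 : 0 < g ^+ 2 by rewrite lt_def sqr_ge0 andbT sqrf_eq0 gne.
have := key (- g * s).
have ht : `|- g * s| < δ.
  rewrite normrM normrN (gtr0_norm s0).
  have : s * (δ * K) >= 0 by apply: mulr_ge0; [apply: ltW | apply: mulr_ge0; [apply: ltW|]].
  move: sD; rewrite /D !mulrDr mulr1 => sD'; rewrite mulrC; lra.
move=> /(_ ht).
have x1 : s * K < 1.
  rewrite -(ltr_pM2r D0) mul1r.
  have : s * K * D = δ * K by rewrite mulrAC sD.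
  rewrite /D => ->; have := normr_ge0 g; lra.
have : 0 < g ^+ 2 * s * (1 - s * K) by apply: mulr_gt0; [apply: mulr_gt0 | rewrite subr_gt0].
have -> : - g * s * g + (- g * s) ^+ 2 * K = - (g ^+ 2 * s * (1 - s * K)) by ring.
by lra.
Qed.

Lemma sumlnV n (X Y : 'I_n -> R) : (forall j, 0 < X j) -> (forall j, 0 < Y j) ->
  \sum_(j < n) Y j * ln (X j / Y j) = - KL Y X.
Proof.
move=> X0 Y0; rewrite /KL -sumrN; apply: eq_bigr => j _.
by rewrite !ln_divE // -mulrN opprB.
Qed.

Lemma ell4X {n} {P : 'I_4 -> 'I_n -> R} {mu : 'I_4 -> R} {X Y : 'I_n -> R} :
  (forall i j, 0 < P i j) -> (forall j, 0 < X j) -> (forall j, 0 < Y j) ->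
  comb P mu = X ->
  mu r1 * (KL (P r1) Y - KL (P r1) X) + mu r2 * (KL (P r2) Y - KL (P r2) X) +
  mu r3 * (KL (P r3) Y - KL (P r3) X) + mu r4 * (KL (P r4) Y - KL (P r4) X) = KL X Y.
Proof.
move=> P0 X0 Y0 e; rewrite -(sum4 (fun i => mu i * (KL (P i) Y - KL (P i) X))) ell_comb // e //.
Qed.

Lemma ell4Y {n} {P : 'I_4 -> 'I_n -> R} {mu : 'I_4 -> R} {X Y : 'I_n -> R} :
  (forall i j, 0 < P i j) -> (forall j, 0 < X j) -> (forall j, 0 < Y j) ->
  comb P mu = Y ->
  mu r1 * (KL (P r1) Y - KL (P r1) X) + mu r2 * (KL (P r2) Y - KL (P r2) X) +
  mu r3 * (KL (P r3) Y - KL (P r3) X) + mu r4 * (KL (P r4) Y - KL (P r4) X) = - KL Y X.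
Proof.
move=> P0 X0 Y0 e; rewrite -(sum4 (fun i => mu i * (KL (P i) Y - KL (P i) X))) ell_comb // e sumlnV //.
Qed.

Lemma ord4_cases (i : 'I_4) : i = r1 \/ i = r2 \/ i = r3 \/ i = r4.
Proof.
case: i => [[|[|[|[|k]]]] Hk] //.
- by left; apply: val_inj.
- by right; left; apply: val_inj.
- by right; right; left; apply: val_inj.
- by right; right; right; apply: val_inj.
Qed.

Lemma comb_simplex m n (P : 'I_m -> 'I_n -> R) (lam : 'I_m -> R) :
  (forall i, in_simplex (P i)) -> in_csimplex lam -> in_simplex (comb P lam).
Proof.
move=> HP [l0 l1]; split.
  move=> j; have P0 : forall i, 0 < P i j by move=> i; case: (HP i).
  have [d d0 dle] := pos_lb P0.
  apply: (lt_le_trans d0); rewrite /comb.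
  have -> : d = \sum_(i < m) lam i * d by rewrite -mulr_suml l1 mul1r.
  by apply: ler_sum => i _; apply: ler_wpM2l.
rewrite /comb exchange_big /= -l1; apply: eq_bigr => i _.
by rewrite -mulr_sumr (HP i).2 mulr1.
Qed.

Lemma mi_bound m n (P : 'I_m -> 'I_n -> R) (Q : 'I_n -> R) c (lam : 'I_m -> R) :
  (forall i, in_simplex (P i)) -> in_simplex Q -> (forall i, KL (P i) Q <= c) ->
  in_csimplex lam -> mutual_info P lam + KL (comb P lam) Q <= c.
Proof.
move=> HP HQ Hc Hl.
have HC := @comb_simplex m n P lam HP Hl.
have P0 : forall i j, 0 < P i j by move=> i; case: (HP i).
have := @ell_comb m n P lam Q (comb P lam) P0 HQ.1 HC.1.
rewrite sumlnV; [|exact: HQ.1|exact: HC.1].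
move=> e; rewrite mi_eq.
have -> : \sum_(i < m) lam i * KL (P i) (comb P lam) =
          \sum_(i < m) lam i * KL (P i) Q - KL (comb P lam) Q.
  have : \sum_(i < m) lam i * KL (P i) (comb P lam) - \sum_(i < m) lam i * KL (P i) Q
    = - KL (comb P lam) Q.
    by rewrite -sumrB -e; apply: eq_bigr => i _; rewrite mulrBr.
  lra.
rewrite subrK -[c]mul1r -Hl.2 mulr_suml; apply: ler_sum => i _.
by rewrite ler_wpM2l //; apply: Hl.1.
Qed.

Lemma arith1 {l1 l2 l3 l4 m1 m2 m3 m4 w1 w2 w3 w4 A B : R} :
  l1 = 0 -> m1 = 0 -> m2 = 0 -> l1 + l2 + l3 + l4 = 1 -> m1 + m2 + m3 + m4 = 1 ->
  w4 = w3 -> l2 < 0 ->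
  l1 * w1 + l2 * w2 + l3 * w3 + l4 * w4 = A -> 0 <= A ->
  m1 * w1 + m2 * w2 + m3 * w3 + m4 * w4 = - B -> 0 <= B -> w2 <= w3.
Proof.
move=> -> -> -> hl hm -> l2n hA A0 hB B0.
have e1 : l3 * w3 + l4 * w3 = (1 - l2) * w3 by rewrite -mulrDl; congr (_ * _); lra.
have e3 : m3 + m4 = 1 by lra.
have e2 : m3 * w3 + m4 * w3 = w3 by rewrite -mulrDl e3 mul1r.
rewrite mulrBl mul1r in e1; rewrite !mul0r add0r in hA hB.
have h : 0 <= l2 * (w2 - w3) by rewrite mulrBr; lra.
rewrite leNgt; apply/negP => hw.
have : 0 < (- l2) * (w2 - w3) by apply: mulr_gt0; lra.
rewrite mulNr; lra.
Qed.
Lemma arith2 (m3 m4 c D K : R) :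
  m3 + m4 = 1 -> 0 <= c -> 0 < D -> 0 <= K -> m3 * c + m4 * (c - D) = - K -> 0 <= m4.
Proof.
move=> hm c0 D0 K0 h.
have e : m3 * c + m4 * c = c by rewrite -mulrDl hm mul1r.
rewrite mulrBr in h.
rewrite leNgt; apply/negP => hw.
have : 0 < (- m4) * D by apply: mulr_gt0; lra.
rewrite mulNr; lra.
Qed.

End Aux.

Theorem theorem21 (R : realType) (n : nat) (P : 'I_4 -> 'I_n -> R)
  (Q0 Q11 Q12 Q2 : 'I_n -> R) (lam0 lam11 lam12 : 'I_4 -> R) :
  (forall i, in_simplex (P i)) ->
  general_position P ->
  equidistant P Q0 -> barycentric P Q0 lam0 ->
  lam0 r1 < 0 -> lam0 r2 < 0 -> 0 <= lam0 r3 -> 0 <= lam0 r4 ->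
  is_proj P [set r2; r3; r4] Q0 Q11 ->
  is_proj P [set r1; r3; r4] Q0 Q12 ->
  barycentric P Q11 lam11 -> barycentric P Q12 lam12 ->
  lam12 r1 < 0 ->
  lam11 r2 < 0 -> 0 <= lam11 r3 -> 0 <= lam11 r4 ->
  is_proj P [set r3; r4] Q11 Q2 ->
  capacity_output P Q2 /\ is_capacity P (KL (P r3) Q2).
Proof.
move=> HP gp [[_ HQ0] eqd] _ _ _ _ _ pr11 pr12 [s11 bQ11] [s12 bQ12] l121 l112 _ _ pr2.
have P0 : forall i j, 0 < P i j by move=> i; case: (HP i).
have HQ11 := pr11.1.2; have HQ12 := pr12.1.2; have HQ2 := pr2.1.2.
have f11a := @foc R 4 n P _ _ _ r2 r3 HP HQ0 pr11 ltac:(by rewrite !inE) ltac:(by rewrite !inE).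
have f11b := @foc R 4 n P _ _ _ r3 r4 HP HQ0 pr11 ltac:(by rewrite !inE) ltac:(by rewrite !inE).
have f12a := @foc R 4 n P _ _ _ r1 r3 HP HQ0 pr12 ltac:(by rewrite !inE) ltac:(by rewrite !inE).
have f12b := @foc R 4 n P _ _ _ r3 r4 HP HQ0 pr12 ltac:(by rewrite !inE) ltac:(by rewrite !inE).
have f2 := @foc R 4 n P _ _ _ r3 r4 HP HQ11 pr2 ltac:(by rewrite !inE) ltac:(by rewrite !inE).
rewrite (eqd r2 r3) in f11a; rewrite (eqd r4 r3) in f11b f12b; rewrite (eqd r1 r3) in f12a.
have e11a : KL (P r2) Q11 = KL (P r3) Q11 by lra.
have e11b : KL (P r4) Q11 = KL (P r3) Q11 by lra.
have e12a : KL (P r1) Q12 = KL (P r3) Q12 by lra.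
have e12b : KL (P r4) Q12 = KL (P r3) Q12 by lra.
have e2 : KL (P r4) Q2 = KL (P r3) Q2 by lra.
have [lS [lSsupp [lSsum lSQ]]] := pr11.1.1.
have el11 : lam11 = lS by apply: (bary_uniq gp) => //; rewrite -bQ11 -lSQ.
have l111 : lam11 r1 = 0 by rewrite el11; apply: lSsupp; rewrite !inE.
have [lT [lTsupp [lTsum lTQ]]] := pr12.1.1.
have el12 : lam12 = lT by apply: (bary_uniq gp) => //; rewrite -bQ12 -lTQ.
have l122 : lam12 r2 = 0 by rewrite el12; apply: lTsupp; rewrite !inE.
have [mu [musupp [musum muQ]]] := pr2.1.1.
have mu1 : mu r1 = 0 by apply: musupp; rewrite !inE.
have mu2 : mu r2 = 0 by apply: musupp; rewrite !inE.
have ms := musum; rewrite sum4 in ms.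
have s11' := s11; rewrite sum4 in s11'.
have s12' := s12; rewrite sum4 in s12'.
have D2 : KL (P r2) Q2 <= KL (P r3) Q2.
  have A := ell4X P0 HQ11.1 HQ2.1 (esym bQ11).
  have B := ell4Y P0 HQ11.1 HQ2.1 (esym muQ).
  have := arith1 l111 mu1 mu2 s11' ms _ l112 A (KL_ge0 HQ11 HQ2) B (KL_ge0 HQ2 HQ11).
  by move=> /(_ ltac:(lra)); lra.
have D1 : KL (P r1) Q2 <= KL (P r3) Q2.
  have A := ell4X P0 HQ12.1 HQ2.1 (esym bQ12).
  have B := ell4Y P0 HQ12.1 HQ2.1 (esym muQ).
  have := @arith1 R (lam12 r2) (lam12 r1) (lam12 r3) (lam12 r4) (mu r2) (mu r1) (mu r3) (mu r4)
    (KL (P r2) Q2 - KL (P r2) Q12) (KL (P r1) Q2 - KL (P r1) Q12)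
    (KL (P r3) Q2 - KL (P r3) Q12) (KL (P r4) Q2 - KL (P r4) Q12) (KL Q12 Q2) (KL Q2 Q12)
    l122 mu2 mu1.
  move=> /(_ ltac:(lra) ltac:(lra) ltac:(lra) l121 ltac:(lra) (KL_ge0 HQ12 HQ2) ltac:(lra) (KL_ge0 HQ2 HQ12)).
  lra.
have neq : forall a b : 'I_4, a != b -> 0 < KL (P a) (P b).
  move=> a b ab; rewrite lt_def KL_ge0 ?andbT //; apply/eqP => h.
  have e := KL_eq0 (HP a) (HP b) h.
  have := @bary_uniq _ _ _ _ (ee a) (ee b) gp (sum_e a) (sum_e b) ltac:(by rewrite !comb_e e).
  move/(congr1 (fun f => f a)); rewrite /ee eqxx (negbTE ab) => /eqP.
  by rewrite eqr_nat.
have D43 := neq r4 r3 isT.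
have D34 := neq r3 r4 isT.
have c0 : 0 <= KL (P r3) Q2 := KL_ge0 (HP r3) HQ2.
have mu4 : 0 <= mu r4.
  have B := ell4Y (X := P r3) P0 (HP r3).1 HQ2.1 (esym muQ).
  rewrite mu1 mu2 KL_self e2 in B.
  apply: (@arith2 R (mu r3) (mu r4) (KL (P r3) Q2) (KL (P r4) (P r3)) (KL Q2 (P r3))) => //.
  - by lra.
  - exact: KL_ge0.
  - by lra.
have mu3 : 0 <= mu r3.
  have B := ell4Y (X := P r4) P0 (HP r4).1 HQ2.1 (esym muQ).
  rewrite mu1 mu2 KL_self e2 in B.
  apply: (@arith2 R (mu r4) (mu r3) (KL (P r3) Q2) (KL (P r3) (P r4)) (KL Q2 (P r4))) => //.
  - by lra.
  - exact: KL_ge0.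
  - by lra.
have Dle : forall i, KL (P i) Q2 <= KL (P r3) Q2.
  move=> i; case: (ord4_cases i) => [->|[->|[->|->]]] //; lra.
have Hmu : in_csimplex mu.
  split => //; move=> i; case: (ord4_cases i) => [->|[->|[->|->]]] //; lra.
have Imu : mutual_info P mu = KL (P r3) Q2.
  rewrite mi_eq -muQ sum4 mu1 mu2 e2 !mul0r !add0r -mulrDl.
  have -> : mu r3 + mu r4 = 1 by lra.
  by rewrite mul1r.
have bnd := fun lam hl => @mi_bound R 4 n P Q2 (KL (P r3) Q2) lam HP HQ2 Dle hl.
have kge := fun lam hl => KL_ge0 (@comb_simplex R 4 n P lam HP hl) HQ2.
split; split.
- exists mu; split => //; split; last by rewrite -muQ.
  by move=> lam hl; rewrite Imu; have := bnd lam hl; have := kge lam hl; lra.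
- move=> lam hl hmax; have := hmax mu Hmu; rewrite Imu => h1.
  apply: KL_eq0 (@comb_simplex R 4 n P lam HP hl) HQ2 _.
  by have := bnd lam hl; have := kge lam hl; lra.
- by exists mu.
- by move=> lam hl; have := bnd lam hl; have := kge lam hl; lra.
Qed.
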